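(* Suppose that for every unit vector $\theta\in\Theta$, the random variable $x_0^\top\theta$ with $x_0\sim\mathcal D_0^X$ has a density bounded above by $\phi_u$. Then for all $\beta,\beta'>0$ and $\theta\in\Theta$, $\mathrm{TV}(\mathcal D_\beta(\theta),\mathcal D_{\beta'}(\theta))\le\phi_u|\beta-\beta'|$; i.e. the atlas is $\epsilon_{\mathrm{TV}}$-smooth with $\epsilon_{\mathrm{TV}}\le\phi_u$.
   Context: Binary strategic classification: $\Theta\subseteq\{\theta\in\mathbb R^{d}:\|\theta\|=1\}$, a threshold $T\in\mathbb R$, classifiers $f_\theta(x)=\mathbf 1\{\theta^\top x\ge T\}$. For budget $\beta>0$, an individual with features $x_0$ responds with $g_\beta(x_0,\theta)=x_0+\theta(T-x_0^\top\theta)$ if $x_0^\top\theta\in[T-\beta,T)$ and $g_\beta(x_0,\theta)=x_0$ otherwise. Given a base distribution $\mathcal D_0$ of $(x_0,y)$ with feature marginal $\mathcal D_0^X$, $(x,y)\sim\mathcal D_\beta(\theta)$ iff $(x_0,y)\sim\mathcal D_0$ and $x=g_\beta(x_0,\theta)$. $\mathrm{TV}(P,Q)=\sup_A|P(A)-Q(A)|$. *)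

(* Defs.v *)
From HB Require Import structures.
From mathcomp Require Import all_boot all_order all_algebra.
From mathcomp Require Import all_classical all_reals all_analysis.
Set Implicit Arguments. Unset Strict Implicit. Unset Printing Implicit Defensive.
Import Order.TTheory GRing.Theory Num.Theory.
Local Open Scope classical_set_scope.
Local Open Scope ring_scope.

(* Features live in R^d, represented as d.-tuple R, equipped with the
   library's product (Borel) sigma-algebra on tuples; labels are bool
   (discrete sigma-algebra); (x, y) pairs carry the product sigma-algebra. *)

Definition dotp (R : realType) (d : nat) (x y : d.-tuple R) : R :=
  \sum_(i < d) tnth x i * tnth y i.

Definition unit_vec (R : realType) (d : nat) (t : d.-tuple R) : Prop :=
  dotp t t = 1.

Definition add_scaled (R : realType) (d : nat) (x0 : d.-tuple R) (c : R)
    (t : d.-tuple R) : d.-tuple R :=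
  [tuple tnth x0 i + c * tnth t i | i < d].

Definition gresp (R : realType) (d : nat) (T beta : R)
    (x0 t : d.-tuple R) : d.-tuple R :=
  if (T - beta <= dotp x0 t) && (dotp x0 t < T)
  then add_scaled x0 (T - dotp x0 t) t
  else x0.

Definition Dbeta (R : realType) (d : nat)
    (D0 : set (d.-tuple R * bool) -> \bar R) (T beta : R) (t : d.-tuple R)
    (A : set (d.-tuple R * bool)) : \bar R :=
  D0 ((fun p => (gresp T beta p.1 t, p.2)) @^-1` A).

Definition TV (dsp : measure_display) (X : measurableType dsp) (R : realType)
    (P Q : set X -> \bar R) : \bar R :=
  ereal_sup [set (`|P A - Q A|)%E | A in [set A : set X | measurable A]].

(* Main.v *)
Require Import Defs.
From HB Require Import structures.
From mathcomp Require Import all_boot all_order all_algebra.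
From mathcomp Require Import all_classical all_reals all_analysis.
From mathcomp Require Import lra.
Import Order.TTheory GRing.Theory Num.Theory.
Local Open Scope classical_set_scope.
Local Open Scope ring_scope.

Section S.
Variables (R : realType) (d : nat) (t : d.-tuple R).

Lemma mdot : measurable_fun [set: (d.-tuple R * bool)%type]
  (fun p : (d.-tuple R * bool) => dotp p.1 t).
Proof.
rewrite /dotp.
apply: measurable_sum => i.
apply: measurable_realfun.measurable_funM => //.
exact: measurableT_comp (measurable_tnth i) measurable_fst.
Qed.

Lemma mg (T b : R) : measurable_fun [set: (d.-tuple R * bool)%type]
  (fun p : (d.-tuple R * bool) => (gresp T b p.1 t, p.2)).
Proof.
apply: measurable_fun_pair => //.
rewrite /gresp.
apply: measurable_fun_ifT.
- apply: measurable_and.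
  + apply: measurable_realfun.measurable_fun_ler => //; exact: mdot.
  + apply: measurable_realfun.measurable_fun_ltr => //; exact: mdot.
- apply/measurable_fun_tnthP => i /=.
  rewrite /comp.
  under eq_fun do rewrite tnth_mktuple.
  apply: measurable_realfun.measurable_funD.
  + exact: measurableT_comp (measurable_tnth i) measurable_fst.
  + apply: measurable_realfun.measurable_funM => //.
    apply: measurable_realfun.measurable_funB => //; exact: mdot.
- exact: measurable_fst.
Qed.
Lemma gresp_eq (T b1 b2 : R) (x : d.-tuple R) : b1 <= b2 ->
  ~ [set` `[T - b2, T - b1[%R] (dotp x t) ->
  gresp T b1 x t = gresp T b2 x t.
Proof.
move=> b12 /= nE; rewrite /gresp.
move: nE; rewrite in_itv /=.
set z := dotp x t.
case h1: (T - b1 <= z); case h2: (T - b2 <= z); case h3: (z < T) => //=;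
  move=> H; exfalso; apply: H; rewrite ?h1 ?h2 ?h3 /=;
  move: h1 h2 h3; rewrite ?ler_eqVlt; lra.
Qed.

Lemma key (T b1 b2 : R) (D0 : probability (d.-tuple R * bool)%type R)
  (A : set (d.-tuple R * bool)) : b1 <= b2 -> measurable A ->
  let E := [set p : (d.-tuple R * bool) | [set` `[T - b2, T - b1[%R] (dotp p.1 t)] in
  (Dbeta D0 T b1 t A <= Dbeta D0 T b2 t A + D0 E)%E /\
  (Dbeta D0 T b2 t A <= Dbeta D0 T b1 t A + D0 E)%E.
Proof.
move=> b12 mA E.
have mE : measurable E.
  have := mdot measurableT _ (measurable_itv `[T - b2, T - b1[%R).
  by rewrite setTI.
have mS b : measurable ((fun p => (gresp T b p.1 t, p.2)) @^-1` A).
  by have := mg T b measurableT _ mA; rewrite setTI.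
rewrite /Dbeta; split.
- apply: le_trans (measureU2 _ (mS b2) mE).
  apply: le_measure; rewrite ?inE; [exact: mS|exact: measurableU|].
  move=> p /= Ap; have [Ep|nEp] := pselect (E p); [by right|left].
  by rewrite -(@gresp_eq T b1 b2 p.1 b12 nEp).
- apply: le_trans (measureU2 _ (mS b1) mE).
  apply: le_measure; rewrite ?inE; [exact: mS|exact: measurableU|].
  move=> p /= Ap; have [Ep|nEp] := pselect (E p); [by right|left].
  by rewrite (@gresp_eq T b1 b2 p.1 b12 nEp).
Qed.
Lemma dens_bound (T phi_u b1 b2 : R) (D0 : probability (d.-tuple R * bool)%type R)
  (f : R -> R) : measurable_fun setT f -> (forall r, 0 <= f r <= phi_u) ->
  (forall B : set R, measurable B ->
          D0 [set p | B (dotp p.1 t)] =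
          (\int[lebesgue_measure]_(r in B) (f r)%:E)%E) ->
  b1 <= b2 ->
  (D0 [set p : (d.-tuple R * bool) | [set` `[T - b2, T - b1[%R] (dotp p.1 t)]
    <= (phi_u * (b2 - b1))%:E)%E.
Proof.
move=> mf fb hD b12.
have mI : measurable ([set` `[T - b2, T - b1[%R] : set R) by exact: measurable_itv.
rewrite hD //.
apply: (@le_trans _ _ (\int[lebesgue_measure]_(r in [set` `[T - b2, T - b1[%R]) (cst phi_u%:E) r)%E).
  apply: ge0_le_integral => //.
  - by move=> x _; rewrite lee_fin; case/andP: (fb x).
  - apply/measurable_realfun.measurable_EFinP; exact: measurable_funS mf.
  - by move=> x _; rewrite lee_fin; case/andP: (fb x).
rewrite integral_cst //; set L := (X in (_ * X)%E); have -> : L = _ := lebesgue_measure_itv _; rewrite /=.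
rewrite lte_fin.
case: ltrP => h.
  by rewrite -EFinB -EFinM lee_fin; apply: ler_wpM2l; [case/andP: (fb 0); apply: le_trans|lra].
rewrite mule0 lee_fin; apply: mulr_ge0; [case/andP: (fb 0); apply: le_trans|lra].
Qed.
End S.

Lemma abs_bound (R : realType) (a b c : \bar R) : a \is a fin_num -> b \is a fin_num ->
  (a <= b + c -> b <= a + c -> `|a - b| <= c)%E.
Proof.
case: a => [a||] //; case: b => [b||] //; case: c => [c||] //= _ _.
- rewrite -!EFinD !lee_fin => h1 h2; rewrite ler_norml; apply/andP; split; lra.
- by move=> _ _; rewrite leey.
Qed.

Theorem claim3 (R : realType) (d : nat) (Theta : set (d.-tuple R))
    (T phi_u : R) (D0 : probability (d.-tuple R * bool)%type R) :
  (forall t, Theta t -> unit_vec t) ->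
  (forall t, Theta t ->
     exists f : R -> R,
       measurable_fun setT f /\
       (forall r, 0 <= f r <= phi_u) /\
       (forall B : set R, measurable B ->
          D0 [set p | B (dotp p.1 t)] =
          (\int[lebesgue_measure]_(r in B) (f r)%:E)%E)) ->
  forall beta beta' : R, 0 < beta -> 0 < beta' ->
  forall t, Theta t ->
    (TV (Dbeta D0 T beta t) (Dbeta D0 T beta' t)
     <= (phi_u * `|beta - beta'|)%:E)%E.
Proof.
move=> _ hdens beta beta' _ _ t Tt.
have [f [mf [fb hD]]] := hdens t Tt.
apply: ge_ereal_sup => _ [A mA <-].
have finS b : Dbeta D0 T b t A \is a fin_num.
  apply: fin_num_measure.
  by have := @mg _ _ t T b measurableT _ mA; rewrite setTI.

have [le|lt] := lerP beta beta'.
- have [h1 h2] := @key _ _ t T _ _ D0 A le mA.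
  have hb := @dens_bound _ _ t T phi_u _ _ D0 f mf fb hD le.
  have k1 := le_trans h1 (leeD2l (Dbeta D0 T beta' t A) hb).
  have k2 := le_trans h2 (leeD2l (Dbeta D0 T beta t A) hb).
  exact: (@abs_bound _ _ _ _ (finS beta) (finS beta') k1 k2).
- have le : beta' <= beta by lra.
  have [h1 h2] := @key _ _ t T _ _ D0 A le mA.
  have hb := @dens_bound _ _ t T phi_u _ _ D0 f mf fb hD le.
  have k1 := le_trans h2 (leeD2l (Dbeta D0 T beta' t A) hb).
  have k2 := le_trans h1 (leeD2l (Dbeta D0 T beta t A) hb).
  exact: (@abs_bound _ _ _ _ (finS beta) (finS beta') k1 k2).
Qed.
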